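(* Under Assumptions 1-MP, 2-MP (a),(b),(c) and 3-MP, let $g\in\mathcal{G}\setminus\{\mathcal{T}+1\}$ and $1\le t_1\le t_2<g\le t_3\le t_4\le\mathcal{T}$, and let $d\in\mathcal{D}_+$. (1) If 4-MP(a) holds and $(a,b)\mapsto\overline{ATT}^{(t_3,t_4)}(g,a|g,b)$ is differentiable on $\mathcal{D}_+\times\mathcal{D}_+$, then $$\frac{\partial\,\mathbb{E}[\bar Y^{(t_3,t_4)}-\bar Y^{(t_1,t_2)}\mid G=g,D=d]}{\partial d}=\overline{ACRT}^{(t_3,t_4)}(g,d|g,d)+\frac{\partial\overline{ATT}^{(t_3,t_4)}(g,d|g,l)}{\partial l}\Big|_{l=d}.$$ (2) If 5-MP holds, then $\frac{\partial\,\mathbb{E}[\bar Y^{(t_3,t_4)}-\bar Y^{(t_1,t_2)}\mid G=g,D=d]}{\partial d}=\overline{ACR}^{(t_3,t_4)}(g,d)$.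
   Context: Multi-period setup. Periods $t=1,\dots,\mathcal{T}$. Each unit has a timing group $G\in\mathcal{G}\subseteq\{2,\dots,\mathcal{T}+1\}$ ($G=\mathcal{T}+1$ means never treated) and a dose $D\ge0$, with $D=0$ exactly for never-treated units and $D\in\mathcal{D}_+$ for units with $G\le\mathcal{T}$. Potential outcomes $Y_t(g,d)$; $Y_t(0):=Y_t(\mathcal{T}+1,0)$. $W_t:=D\mathbf{1}\{t\ge G\}$. Observed $Y_t=Y_t(0)\mathbf{1}\{t<G\}+Y_t(G,D)\mathbf{1}\{t\ge G\}$; finite means. 1-MP: i.i.d. sampling. 2-MP: (a) support of $D$ is $\{0\}\cup\mathcal{D}_+$, $\mathbb{P}(D=0)>0$, every $d\in\mathcal{D}_+$ in the support of $D\mid G=g$ for $g\le\mathcal{T}$; (b) $\mathcal{D}_+=[d_L,d_U]$, $0<d_L<d_U<\infty$; (c) $d\mapsto\mathbb{E}[\Delta Y_t\mid G=g,D=d]$ continuously differentiable on $\mathcal{D}_+$. 3-MP: (a) $Y_t(g,d)=Y_t(0)$ for $t<g$; (b) $W_1=0$, $W_{t-1}=d\Rightarrow W_t=d$. 4-MP(a): for all $g\in\mathcal{G}$, $t=2,\dots,\mathcal{T}$, $d\in\mathcal{D}$: $\mathbb{E}[Y_t(0)-Y_{t-1}(0)\mid G=g,D=d]=\mathbb{E}[Y_t(0)-Y_{t-1}(0)\mid D=0]$. 5-MP: for all $g\in\mathcal{G}$, $t=2,\dots,\mathcal{T}$, $d\in\mathcal{D}$: $\mathbb{E}[Y_t(g,d)-Y_{t-1}(0)\mid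 G=g,D=d]=\mathbb{E}[Y_t(g,d)-Y_{t-1}(0)\mid G=g]$ and $\mathbb{E}[Y_t(0)-Y_{t-1}(0)\mid G=g,D=d]=\mathbb{E}[Y_t(0)-Y_{t-1}(0)\mid D=0]$. Notation: $\bar Y^{(t_1,t_2)}:=\frac1{t_2-t_1+1}\sum_{t=t_1}^{t_2}Y_t$. $ATE(g,t,d):=\mathbb{E}[Y_t(g,d)-Y_t(0)\mid G=g]$; $\overline{ATE}^{(t_3,t_4)}(g,d):=\frac1{t_4-t_3+1}\sum_{t=t_3}^{t_4}ATE(g,t,d)$, $\overline{ACR}^{(t_3,t_4)}(g,d):=\partial\overline{ATE}^{(t_3,t_4)}(g,d)/\partial d$; $\overline{ATT}^{(t_3,t_4)}(g,a|g,b):=\mathbb{E}[\frac1{t_4-t_3+1}\sum_{t=t_3}^{t_4}(Y_t(g,a)-Y_t(0))\mid G=g,D=b]$; $\overline{ACRT}^{(t_3,t_4)}(g,d|g,d):=\partial\overline{ATT}^{(t_3,t_4)}(g,l|g,d)/\partial l|_{l=d}$. *)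

(* Defs.v *)
From HB Require Import structures.
From mathcomp Require Import all_boot all_order all_algebra.
From mathcomp Require Import all_classical all_reals all_analysis.
Set Implicit Arguments. Unset Strict Implicit. Unset Printing Implicit Defensive.
Import Order.TTheory GRing.Theory Num.Theory.
Import numFieldNormedType.Exports.
Local Open Scope classical_set_scope.
Local Open Scope ring_scope.

Definition Dplus (R : realType) (dL dU : R) : set R := [set x : R | dL <= x <= dU].

(* f has derivative l at x relative to the set I (one-sided at endpoints). *)
Definition deriv_within (R : realType) (I : set R) (f : R -> R) (x l : R) : Prop :=
  (fun y => (f y - f x) / (y - x)) @ within [set y | I y /\ y != x] (nbhs x) --> l.

(* (a,b) |-> f a b is (jointly, Frechet) differentiable at (a,b) relative to I x I,
   with partial derivatives pa, pb. *)
Definition differentiable2_within (R : realType) (I : set R) (f : R -> R -> R)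
    (a b pa pb : R) : Prop :=
  (fun hk : R * R => (f hk.1 hk.2 - f a b - (pa * (hk.1 - a) + pb * (hk.2 - b)))
                      / (`|hk.1 - a| + `|hk.2 - b|))
    @ within [set p : R * R | I p.1 /\ I p.2 /\ p != (a, b)] (nbhs (a, b)) --> 0.

Definition avg (R : realType) (t1 t2 : nat) (f : nat -> R) : R :=
  (\sum_(t1 <= t < t2.+1) f t) / (t2.+1 - t1)%:R.

Section Model.
Context (d0 : measure_display) (Omega : measurableType d0) (R : realType).
(* mu g d : regular conditional law of the potential outcomes given (G = g, D = d);
   nuD g : conditional law of D given G = g. *)
Variables (mu : nat -> R -> probability Omega R) (nuD : nat -> probability R R)
          (Y : nat -> nat -> R -> Omega -> R) (T : nat).

(* Y_t(0) := Y_t(T+1, 0) *)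
Definition Y0 (t : nat) : Omega -> R := Y t T.+1 0.

Definition CE (g : nat) (d : R) (X : Omega -> R) : R := Rintegral (mu g d) setT X.

(* E[X | D = 0] = E[X | G = T+1, D = 0] (D = 0 exactly for never-treated units) *)
Definition CE0 (X : Omega -> R) : R := CE T.+1 0 X.

Definition CEG (g : nat) (X : Omega -> R) : R :=
  Rintegral (nuD g) setT (fun d' => CE g d' X).

(* observed outcome Y_t on the event {G = g, D = d} *)
Definition Yobs (g : nat) (d : R) (t : nat) : Omega -> R :=
  fun w => if (t < g)%N then Y0 t w else Y t g d w.

Definition ECondDiff (t1 t2 t3 t4 g : nat) (d : R) : R :=
  CE g d (fun w => avg t3 t4 (fun t => Yobs g d t w) - avg t1 t2 (fun t => Yobs g d t w)).

Definition EDeltaY (t g : nat) (d : R) : R :=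
  CE g d (fun w => Yobs g d t w - Yobs g d t.-1 w).

Definition ATTbar (t3 t4 g : nat) (a b : R) : R :=
  CE g b (fun w => avg t3 t4 (fun t => Y t g a w - Y0 t w)).

Definition ATE (g t : nat) (d : R) : R := CEG g (fun w => Y t g d w - Y0 t w).
Definition ATEbar (t3 t4 g : nat) (d : R) : R := avg t3 t4 (fun t => ATE g t d).
End Model.

(* Main.v *)
Require Import Defs.
From HB Require Import structures.
From mathcomp Require Import all_boot all_order all_algebra.
From mathcomp Require Import all_classical all_reals all_analysis.
From mathcomp Require Import ring lra zify.
Import Order.TTheory GRing.Theory Num.Theory.
Import numFieldNormedType.Exports.
Local Open Scope classical_set_scope.
Local Open Scope ring_scope.


Section DW.
Context (R : realType) (I : set R).

Let S (x : R) := [set y : R | I y /\ y != x].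

Lemma dw_ext (f h : R -> R) x l : I x -> (forall y, I y -> f y = h y) ->
  deriv_within I f x l -> deriv_within I h x l.
Proof.
move=> Ix fh; rewrite /deriv_within; apply: cvg_trans; apply: near_eq_cvg.
rewrite near_withinE; apply: nearW => y [Iy _].
by rewrite fh // fh.
Qed.

Lemma dw_add (f h : R -> R) x l m :
  deriv_within I f x l -> deriv_within I h x m ->
  deriv_within I (fun y => f y + h y) x (l + m).
Proof.
move=> Hf Hh; rewrite /deriv_within.
have -> : (fun y => (f y + h y - (f x + h x)) / (y - x)) =
   (fun y => (f y - f x) / (y - x) + (h y - h x) / (y - x)).
  by apply: funext => y; rewrite -mulrDl; congr (_ * _); ring.
exact: cvgD.
Qed.

Lemma dw_scale (f : R -> R) c x l :
  deriv_within I f x l -> deriv_within I (fun y => c * f y) x (c * l).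
Proof.
move=> Hf; rewrite /deriv_within.
have -> : (fun y => (c * f y - c * f x) / (y - x)) =
   (fun y => c * ((f y - f x) / (y - x))).
  by apply: funext => y; rewrite mulrA mulrBr.
exact: cvgMr.
Qed.

Lemma dw_cst c x : deriv_within I (fun _ => c) x 0.
Proof.
rewrite /deriv_within.
have -> : (fun y : R => (c - c) / (y - x)) = (fun _ => 0).
  by apply: funext => y; rewrite subrr mul0r.
exact: cvg_cst.
Qed.

End DW.


Section DW2.
Context (R : realType) (I : set R).

Lemma d2_partial1 f a b pa pb : I b ->
  differentiable2_within I f a b pa pb -> deriv_within I (fun l => f l b) a pa.
Proof.
move=> Ib H; rewrite /deriv_within; apply/cvgrPdist_lt => e e0.
move/cvgrPdist_lt: H => /(_ e e0); rewrite near_withinE => HE.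
have hc : (fun y => (y, b)) @ a --> (a, b).
  exact: (@cvg_pair R R R (nbhs a) (nbhs a) (nbhs b) _ _ _ id (fun _ => b) cvg_id (cvg_cst b)).
rewrite near_withinE; have H2 := hc _ HE.
move: H2; rewrite nbhs_filterE /=; apply: filterS => y /= Hy [Iy ya].
have /Hy : [set p : R * R | I p.1 /\ I p.2 /\ p != (a, b)] (y, b).
  by split => //; split => //=; rewrite xpair_eqE negb_and ya.
rewrite /= subrr mulr0 addr0 normr0 addr0 sub0r normrN.
have ya0 : y - a != 0 by rewrite subr_eq0.
set N := f y b - f a b - pa * (y - a).
have -> : (f y b - f a b) / (y - a) = pa + N / (y - a).
  by rewrite /N; field.
by rewrite opprD addNKr normrN normrM !normrM !normfV normr_id.
Qed.

Lemma d2_partial2 f a b pa pb : I a ->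
  differentiable2_within I f a b pa pb -> deriv_within I (fun l => f a l) b pb.
Proof.
move=> Ia H; rewrite /deriv_within; apply/cvgrPdist_lt => e e0.
move/cvgrPdist_lt: H => /(_ e e0); rewrite near_withinE => HE.
have hc : (fun y => (a, y)) @ b --> (a, b).
  exact: (@cvg_pair R R R (nbhs b) (nbhs a) (nbhs b) _ _ _ (fun _ => a) id (cvg_cst a) cvg_id).
rewrite near_withinE; have H2 := hc _ HE.
move: H2; rewrite nbhs_filterE /=; apply: filterS => y /= Hy [Iy ya].
have /Hy : [set p : R * R | I p.1 /\ I p.2 /\ p != (a, b)] (a, y).
  by split => //; split => //=; rewrite xpair_eqE negb_and ya orbT.
rewrite /= subrr mulr0 add0r normr0 add0r ?sub0r normrN.
have ya0 : y - b != 0 by rewrite subr_eq0.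
set N := f a y - f a b - pb * (y - b).
have -> : (f a y - f a b) / (y - b) = pb + N / (y - b).
  by rewrite /N; field.
by rewrite opprD addNKr normrN add0r !normrM !normfV normr_id.
Qed.

Lemma d2_diag f a pa pb :
  differentiable2_within I f a a pa pb -> deriv_within I (fun l => f l l) a (pa + pb).
Proof.
move=> H; rewrite /deriv_within; apply/cvgrPdist_lt => e e0.
have e20 : 0 < e / 2 by rewrite divr_gt0.
move/cvgrPdist_lt: H => /(_ _ e20); rewrite near_withinE => HE.
have hc : (fun y => (y, y)) @ a --> (a, a).
  exact: (@cvg_pair R R R (nbhs a) (nbhs a) (nbhs a) _ _ _ id id cvg_id cvg_id).
rewrite near_withinE; have H2 := hc _ HE.
move: H2; rewrite nbhs_filterE /=; apply: filterS => y /= Hy [Iy ya].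
have /Hy : [set p : R * R | I p.1 /\ I p.2 /\ p != (a, a)] (y, y).
  by split => //; split => //=; rewrite xpair_eqE negb_and ya.
rewrite /= sub0r normrN.
have ya0 : y - a != 0 by rewrite subr_eq0.
have na0 : `|y - a| != 0 by rewrite normr_eq0.
set N := f y y - f a a - (pa + pb) * (y - a).
have -> : (f y y - f a a) / (y - a) = (pa + pb) + N / (y - a).
  by rewrite /N; field.
have -> : (f y y - f a a - (pa * (y - a) + pb * (y - a))) / (`|y - a| + `|y - a|)
   = (N / `|y - a|) / 2.
  by rewrite /N -mulr2n -mulr_natr; field; exact: na0.
rewrite opprD addNKr normrN.
have -> : `|N / `|y - a| / 2| = `|N / (y - a)| / 2.
  by rewrite !normrM !normfV normr_id (ger0_norm (_ : 0 <= 2)).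
move=> h; lra.
Qed.

End DW2.


Section Int.
Context (d0 : measure_display) (Omega : measurableType d0) (R : realType)
  (P : probability Omega R).

Definition Int (f : Omega -> R) := P.-integrable setT (EFin \o f).
End Int.
Arguments Int {d0 Omega R} P f.
Section Int2.
Context (d0 : measure_display) (Omega : measurableType d0) (R : realType)
  (P : probability Omega R).
Local Notation Int := (Int P).


Lemma Int_add f h : Int f -> Int h -> Int (fun w => f w + h w).
Proof.
move=> Hf Hh; have := integrableD measurableT Hf Hh.
by apply: (eq_integrable measurableT) => w _ /=; rewrite EFinD.
Qed.

Lemma Int_sub f h : Int f -> Int h -> Int (fun w => f w - h w).
Proof.
move=> Hf Hh; have := integrableB measurableT Hf Hh.
by apply: (eq_integrable measurableT) => w _ /=; rewrite EFinB.
Qed.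

Lemma Int_sum (F : nat -> Omega -> R) (s : seq nat) :
  (forall t, Int (F t)) -> Int (fun w => \sum_(t <- s) F t w).
Proof.
move=> HF; elim: s => [|t s IH].
  have := @integrable0 _ _ _ P setT.
  by apply: (eq_integrable measurableT) => w _ /=; rewrite big_nil.
have := Int_add _ _ (HF t) IH.
by apply: (eq_integrable measurableT) => w _ /=; rewrite big_cons.
Qed.

Lemma Rint_sum (F : nat -> Omega -> R) (s : seq nat) :
  (forall t, Int (F t)) ->
  Rintegral P setT (fun w => \sum_(t <- s) F t w) = \sum_(t <- s) Rintegral P setT (F t).
Proof.
move=> HF; elim: s => [|t s IH].
  rewrite big_nil; under eq_Rintegral do rewrite big_nil.
  by rewrite Rintegral_cst // mul0r.
rewrite big_cons; under eq_Rintegral do rewrite big_cons.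
by rewrite RintegralD //; [rewrite IH | exact: HF | exact: Int_sum].
Qed.

Lemma Rint_avg (F : nat -> Omega -> R) t1 t2 :
  (forall t, Int (F t)) ->
  Rintegral P setT (fun w => avg t1 t2 (fun t => F t w))
   = avg t1 t2 (fun t => Rintegral P setT (F t)).
Proof.
move=> HF; rewrite /avg RintegralZr //; last exact: Int_sum.
by rewrite Rint_sum.
Qed.

Lemma Int_avg (F : nat -> Omega -> R) t1 t2 :
  (forall t, Int (F t)) -> Int (fun w => avg t1 t2 (fun t => F t w)).
Proof.
move=> HF; rewrite /avg.
have := integrableZr measurableT ((t2.+1 - t1)%:R^-1) (Int_sum _ (index_iota t1 t2.+1) HF).
by apply: (eq_integrable measurableT) => w _ /=.
Qed.

End Int2.


Section Avg.
Context (R : realType).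

Lemma avg_eq t1 t2 (f h : nat -> R) :
  (forall t, (t1 <= t <= t2)%N -> f t = h t) -> avg t1 t2 f = avg t1 t2 h.
Proof. by move=> H; rewrite /avg; congr (_ / _); apply: eq_big_nat => t; exact: H. Qed.

Lemma avg_add t1 t2 (f h : nat -> R) :
  avg t1 t2 (fun t => f t + h t) = avg t1 t2 f + avg t1 t2 h.
Proof. by rewrite /avg big_split mulrDl. Qed.

Lemma avg_sub t1 t2 (f h : nat -> R) :
  avg t1 t2 (fun t => f t - h t) = avg t1 t2 f - avg t1 t2 h.
Proof. by rewrite /avg big_split /= sumrN mulrDl mulNr. Qed.

Lemma avg_cst t1 t2 (c : R) : (t1 <= t2)%N -> avg t1 t2 (fun _ => c) = c.
Proof.
move=> h; rewrite /avg sumr_const_nat -[c *+ _]mulr_natr mulfK //.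
by rewrite pnatr_eq0 -lt0n subn_gt0 ltnS.
Qed.

Lemma avg_cst_add t1 t2 (c : R) f : (t1 <= t2)%N ->
  avg t1 t2 (fun t => c + f t) = c + avg t1 t2 f.
Proof. by move=> h; rewrite avg_add avg_cst. Qed.

Lemma telesc (B c : nat -> R) T :
  (forall t, (2 <= t <= T)%N -> B t - B t.-1 = c t) ->
  forall t, (1 <= t <= T)%N -> B t = B 1%N + \sum_(2 <= u < t.+1) c u.
Proof.
move=> H; elim=> [|t IH] // /andP[h1 hT].
case: t IH h1 hT => [|t] IH _ hT; first by rewrite big_geq // addr0.
rewrite big_nat_recr //= addrA -IH; last by rewrite /= ltnW.
have := H t.+2; rewrite hT /= => /(_ isT) h; lra.
Qed.

End Avg.

Section DW3.
Context (R : realType) (I : set R).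

Lemma dw_sum_ex (F : nat -> R -> R) (s : seq nat) x :
  (forall t, t \in s -> exists l, deriv_within I (F t) x l) ->
  exists l, deriv_within I (fun y => \sum_(t <- s) F t y) x l.
Proof.
elim: s => [|t s IH] H.
  exists 0; have -> : (fun y => \sum_(t <- [::]) F t y) = (fun _ => 0).
    by apply: funext => y; rewrite big_nil.
  exact: dw_cst.
have [l1 H1] := H t (mem_head _ _).
have [l2 H2] : exists l, deriv_within I (fun y => \sum_(t <- s) F t y) x l.
  by apply: IH => u us; apply: H; rewrite in_cons us orbT.
exists (l1 + l2).
have -> : (fun y => \sum_(u <- t :: s) F u y) = (fun y => F t y + \sum_(u <- s) F u y).
  by apply: funext => y; rewrite big_cons.
exact: dw_add.
Qed.

Lemma dw_avg_ex (F : nat -> R -> R) t1 t2 x :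
  (forall t, (t1 <= t <= t2)%N -> exists l, deriv_within I (F t) x l) ->
  exists l, deriv_within I (fun y => avg t1 t2 (fun t => F t y)) x l.
Proof.
move=> H.
have [l Hl] : exists l, deriv_within I
    (fun y => \sum_(t <- index_iota t1 t2.+1) F t y) x l.
  by apply: dw_sum_ex => t; rewrite mem_index_iota => /H.
exists ((t2.+1 - t1)%:R^-1 * l).
have -> : (fun y => avg t1 t2 (fun t => F t y)) =
  (fun y => (t2.+1 - t1)%:R^-1 * \sum_(t <- index_iota t1 t2.+1) F t y).
  by apply: funext => y; rewrite /avg mulrC.
exact: dw_scale.
Qed.
End DW3.

Theorem lemma11 (d0 : measure_display) (Omega : measurableType d0) (R : realType)
  (T : nat) (Gset : seq nat)
  (mu : nat -> R -> probability Omega R) (nuD : nat -> probability R R)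
  (Y : nat -> nat -> R -> Omega -> R) (dL dU : R)
  (* timing groups lie in {2,...,T+1}, and the never-treated group is present *)
  (hG : forall g, g \in Gset -> (2 <= g <= T.+1)%N)
  (hNever : T.+1 \in Gset)
  (* finite means / measurability *)
  (hmeas : forall t g a, measurable_fun setT (Y t g a))
  (hint : forall t g a g' d, (mu g' d).-integrable setT (EFin \o Y t g a))
  (hintG : forall t g a g', (nuD g').-integrable setT
                              (EFin \o (fun d' => CE mu g' d' (Y t g a))))
  (* 2-MP (b) *)
  (hdL : 0 < dL) (hdLU : dL < dU)
  (* 2-MP (a): D | G=g is supported on D_+ and every d in D_+ is in its support *)
  (hsuppG : forall g, g \in Gset -> (g <= T)%N -> nuD g (~` Dplus dL dU) = 0%E)
  (hsupp : forall g, g \in Gset -> (g <= T)%N -> forall x, Dplus dL dU x ->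
             forall e : R, 0 < e -> (0 < nuD g (ball x e))%E)
  (* 2-MP (c) *)
  (hC1 : forall g t, g \in Gset -> (g <= T)%N -> (2 <= t <= T)%N ->
           exists f' : R -> R, {within Dplus dL dU, continuous f'} /\
             forall x, Dplus dL dU x ->
               deriv_within (Dplus dL dU) (EDeltaY mu Y T t g) x (f' x))
  (* 3-MP (a): no anticipation *)
  (hNA : forall t g a w, g \in Gset -> (t < g)%N -> Y t g a w = Y0 Y T t w)
  (g t1 t2 t3 t4 : nat) (d : R)
  (hg : g \in Gset) (hgT : g != T.+1)
  (ht : [/\ (1 <= t1)%N, (t1 <= t2)%N, (t2 < g)%N, (g <= t3)%N & (t3 <= t4 <= T)%N])
  (hd : Dplus dL dU d) :
  (* (1) *)
  ((forall g' t, g' \in Gset -> (g' <= T)%N -> (2 <= t <= T)%N -> forall x, Dplus dL dU x ->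
       CE mu g' x (fun w => Y0 Y T t w - Y0 Y T t.-1 w)
       = CE0 mu T (fun w => Y0 Y T t w - Y0 Y T t.-1 w)) ->
   (forall a b, Dplus dL dU a -> Dplus dL dU b ->
       exists pa pb, differentiable2_within (Dplus dL dU)
                       (ATTbar mu Y T t3 t4 g) a b pa pb) ->
   exists acrt pb : R,
     [/\ deriv_within (Dplus dL dU) (fun l => ATTbar mu Y T t3 t4 g l d) d acrt,
         deriv_within (Dplus dL dU) (fun l => ATTbar mu Y T t3 t4 g d l) d pb &
         deriv_within (Dplus dL dU) (ECondDiff mu Y T t1 t2 t3 t4 g) d (acrt + pb)])
  /\
  (* (2) *)
  ((forall g' t, g' \in Gset -> (g' <= T)%N -> (2 <= t <= T)%N -> forall x, Dplus dL dU x ->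
       CE mu g' x (fun w => Y t g' x w - Y0 Y T t.-1 w)
         = CEG mu nuD g' (fun w => Y t g' x w - Y0 Y T t.-1 w)
       /\ CE mu g' x (fun w => Y0 Y T t w - Y0 Y T t.-1 w)
         = CE0 mu T (fun w => Y0 Y T t w - Y0 Y T t.-1 w)) ->
   exists acr : R,
     deriv_within (Dplus dL dU) (ATEbar mu nuD Y T t3 t4 g) d acr /\
     deriv_within (Dplus dL dU) (ECondDiff mu Y T t1 t2 t3 t4 g) d acr).
Proof.
case: ht => h1 h12 h2g hg3 /andP[h34 h4T].
have /andP[g2 gT1] := hG g hg.
have gT : (g <= T)%N by move: gT1; rewrite leq_eqVlt ltnS (negbTE hgT).
have IntY : forall t g' a y, Int (mu g y) (Y t g' a) := fun t g' a y => hint t g' a g y.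
have IntYobs : forall y t, Int (mu g y) (Yobs Y T g y t).
  by move=> y t; rewrite /Yobs; case: (t < g)%N; apply: IntY.
have CE_sub : forall y X1 X2, Int (mu g y) X1 -> Int (mu g y) X2 ->
    CE mu g y (fun w => X1 w - X2 w) = CE mu g y X1 - CE mu g y X2.
  by move=> y X1 X2 H1 H2; rewrite /CE RintegralB.
pose O t y := CE mu g y (Yobs Y T g y t).
have EC : forall y, ECondDiff mu Y T t1 t2 t3 t4 g y
    = avg t3 t4 (fun t => O t y) - avg t1 t2 (fun t => O t y).
  move=> y; rewrite /ECondDiff CE_sub; last 2 first.
  - exact: (@Int_avg _ _ _ (mu g y) (fun t => Yobs Y T g y t) t3 t4 (IntYobs y)).
  - exact: (@Int_avg _ _ _ (mu g y) (fun t => Yobs Y T g y t) t1 t2 (IntYobs y)).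
  by rewrite /CE !(@Rint_avg _ _ _ (mu g y) (fun t => Yobs Y T g y t) _ _ (IntYobs y)).
have OA : forall y t, (g <= t)%N -> O t y = CE mu g y (Y t g y).
  move=> y t h; rewrite /O /Yobs; congr CE; apply: funext => w.
  by rewrite ltnNge h.
have OB : forall y t, (t < g)%N -> O t y = CE mu g y (Y0 Y T t).
  by move=> y t h; rewrite /O /Yobs; congr CE; apply: funext => w; rewrite h.
pose B t y := CE mu g y (Y0 Y T t).
have Bsub : forall y t s, CE mu g y (fun w => Y0 Y T t w - Y0 Y T s w) = B t y - B s y.
  by move=> y t s; rewrite CE_sub //; apply: IntY.
pose I := Dplus dL dU.
have HBgen : forall (PT : forall t, (2 <= t <= T)%N -> forall x, I x ->
       CE mu g x (fun w => Y0 Y T t w - Y0 Y T t.-1 w)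
       = CE0 mu T (fun w => Y0 Y T t w - Y0 Y T t.-1 w)),
    forall y, I y -> forall t, (1 <= t <= T)%N ->
      B t y = B 1%N y + \sum_(2 <= u < t.+1) CE0 mu T (fun w => Y0 Y T u w - Y0 Y T u.-1 w).
  move=> PT y Iy; apply: telesc => t ht.
  by rewrite -Bsub PT.
split.
- move=> PT D2.
  have [pa [pb Hd]] := D2 d d hd hd.
  exists pa, pb; split; [exact: d2_partial1 hd Hd | exact: d2_partial2 hd Hd |].
  pose K t := \sum_(2 <= u < t.+1) CE0 mu T (fun w => Y0 Y T u w - Y0 Y T u.-1 w).
  have HB : forall y, I y -> forall t, (1 <= t <= T)%N -> B t y = B 1%N y + K t.
    by move=> y Iy; apply: HBgen => // t ht x Ix; apply: PT.
  pose C := avg t3 t4 K - avg t1 t2 K.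
  have Heq : forall y, I y ->
      ATTbar mu Y T t3 t4 g y y + C = ECondDiff mu Y T t1 t2 t3 t4 g y.
    move=> y Iy; rewrite EC.
    have -> : ATTbar mu Y T t3 t4 g y y =
        avg t3 t4 (fun t => CE mu g y (Y t g y)) - avg t3 t4 (fun t => B t y).
      rewrite /ATTbar /CE (@Rint_avg _ _ _ (mu g y) (fun t w => Y t g y w - Y0 Y T t w)); last first.
        by move=> t; apply: Int_sub; apply: IntY.
      rewrite -avg_sub; apply: avg_eq => t _.
      by rewrite RintegralB //; apply: IntY.
    rewrite (@avg_eq _ t3 t4 (fun t => O t y) (fun t => CE mu g y (Y t g y))); last first.
      by move=> t /andP[ht _]; apply: OA; exact: leq_trans hg3 ht.
    rewrite (@avg_eq _ t1 t2 (fun t => O t y) (fun t => B 1%N y + K t)); last first.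
      move=> t /andP[ht1 ht2]; rewrite OB; last exact: leq_ltn_trans ht2 h2g.
      apply: HB => //; apply/andP; split; lia.
    rewrite (@avg_eq _ t3 t4 (fun t => B t y) (fun t => B 1%N y + K t)); last first.
      move=> t /andP[ht1 ht2]; apply: HB => //; apply/andP; split; lia.
    rewrite !avg_cst_add; try by lia.
    rewrite /C; ring.
  have := @dw_add R I _ _ _ _ _ (@d2_diag R I _ _ _ _ Hd) (@dw_cst R I C d).
  rewrite addr0 => H.
  exact: (@dw_ext R I _ _ _ _ hd Heq H).

- move=> MP5.
  pose S t y := \sum_(2 <= u < t.+1) EDeltaY mu Y T u g y.
  have HO : forall y t, (1 <= t <= T)%N -> O t y = O 1%N y + S t y.
    move=> y; apply: telesc => t ht.
    by rewrite /EDeltaY (CE_sub _ _ _ (IntYobs y t) (IntYobs y t.-1)).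
  have EC2 : forall y, ECondDiff mu Y T t1 t2 t3 t4 g y
      = avg t3 t4 (fun t => S t y) - avg t1 t2 (fun t => S t y).
    move=> y; rewrite EC.
    rewrite (@avg_eq _ t3 t4 (fun t => O t y) (fun t => O 1%N y + S t y)); last first.
      by move=> t /andP[ht1 ht2]; apply: HO; apply/andP; split; lia.
    rewrite (@avg_eq _ t1 t2 (fun t => O t y) (fun t => O 1%N y + S t y)); last first.
      by move=> t /andP[ht1 ht2]; apply: HO; apply/andP; split; lia.
    rewrite !avg_cst_add; try by lia.
    ring.
  have [L HL] : exists L, deriv_within I (ECondDiff mu Y T t1 t2 t3 t4 g) d L.
    have -> : ECondDiff mu Y T t1 t2 t3 t4 g = (fun y => avg t3 t4 (fun t => S t y)
         + (-1) * avg t1 t2 (fun t => S t y)).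
      by apply: funext => y; rewrite EC2; ring.
    have HS : forall t, (t <= T)%N -> exists l, deriv_within I (S t) d l.
      move=> t tT; apply: dw_sum_ex => u; rewrite mem_index_iota => /andP[u2 ut].
      have [f' [_ Hf]] := hC1 g u hg gT (ltac:(apply/andP; split; lia)).
      by exists (f' d); exact: Hf.
    have [l1 H1] := @dw_avg_ex R I S t3 t4 d (fun t ht => HS t (ltac:(lia))).
    have [l2 H2] := @dw_avg_ex R I S t1 t2 d (fun t ht => HS t (ltac:(lia))).
    exists (l1 + (-1) * l2).
    exact: (@dw_add R I _ _ _ _ _ H1 (@dw_scale R I _ (-1) _ _ H2)).
  pose K t := \sum_(2 <= u < t.+1) CE0 mu T (fun w => Y0 Y T u w - Y0 Y T u.-1 w).
  have HB : forall y, I y -> forall t, (1 <= t <= T)%N -> B t y = B 1%N y + K t.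
    move=> y Iy; apply: HBgen => // t ht x Ix.
    exact: (MP5 g t hg gT ht x Ix).2.
  have CEG_sub : forall t ga a s gb b,
      CEG mu nuD g (fun w => Y t ga a w - Y s gb b w)
      = CEG mu nuD g (Y t ga a) - CEG mu nuD g (Y s gb b).
    move=> t ga a s gb b; rewrite /CEG.
    have -> : (fun d' => CE mu g d' (fun w => Y t ga a w - Y s gb b w))
        = (fun d' => CE mu g d' (Y t ga a) - CE mu g d' (Y s gb b)).
      by apply: funext => d'; rewrite /CE RintegralB //; exact: hint.
    by rewrite RintegralB //; exact: hintG.
  pose e t := CEG mu nuD g (Y0 Y T t) - CEG mu nuD g (Y0 Y T t.-1).
  have HATE : forall y, I y -> forall t, (g <= t <= T)%N ->
      ATE mu nuD Y T g t y = CE mu g y (Y t g y) - B t.-1 y - e t.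
    move=> y Iy t /andP[gt tT].
    have [h5 _] := MP5 g t hg gT (ltac:(apply/andP; split; lia)) y Iy.
    move: h5; rewrite (CE_sub _ _ _ (IntY _ _ _ _) (IntY _ _ _ _)) CEG_sub.
    rewrite /ATE CEG_sub /e /B => h5; lra.
  pose C := avg t3 t4 (fun t => K t.-1) + avg t3 t4 e - avg t1 t2 K.
  have Heq : forall y, I y ->
      ECondDiff mu Y T t1 t2 t3 t4 g y + - C = ATEbar mu nuD Y T t3 t4 g y.
    move=> y Iy; rewrite /ATEbar.
    rewrite (@avg_eq _ t3 t4 (fun t => ATE mu nuD Y T g t y)
       (fun t => (CE mu g y (Y t g y) - B t.-1 y) - e t)); last first.
      by move=> t /andP[ht1 ht2]; apply: HATE => //; apply/andP; split; lia.
    rewrite !avg_sub.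
    rewrite (@avg_eq _ t3 t4 (fun t => B t.-1 y) (fun t => B 1%N y + K t.-1)); last first.
      by move=> t /andP[ht1 ht2]; apply: HB => //; apply/andP; split; lia.
    rewrite EC.
    rewrite (@avg_eq _ t3 t4 (fun t => O t y) (fun t => CE mu g y (Y t g y))); last first.
      by move=> t /andP[ht _]; apply: OA; lia.
    rewrite (@avg_eq _ t1 t2 (fun t => O t y) (fun t => B 1%N y + K t)); last first.
      move=> t /andP[ht1 ht2]; rewrite OB; last by lia.
      by apply: HB => //; apply/andP; split; lia.
    rewrite !avg_cst_add; try by lia.
    rewrite /C /e avg_sub; ring.
  exists L; split => //.
  have := @dw_add R I _ _ _ _ _ HL (@dw_cst R I (- C) d).
  rewrite addr0 => H.
  exact: (@dw_ext R I _ _ _ _ hd Heq H).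
Qed.
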